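(* (1) For every integer $n\ge 0$, the polynomials $B_n(t)$ and $B_{n+1}(t)$ are coprime in $\mathbb{Z}[t]$, i.e. $\gcd(B_n(t),B_{n+1}(t))=1$. (2) If $a,b$ are odd positive integers with $a+b=2^{n}$ for some $n$, then $\gcd(B_a(t),B_b(t))=1$.
   Context: The Stern polynomials $B_n(t)\in\mathbb{Z}[t]$, $n\ge 0$, are defined by $B_0(t)=0$, $B_1(t)=1$, $B_{2n}(t)=tB_n(t)$ and $B_{2n+1}(t)=B_n(t)+B_{n+1}(t)$ for $n\ge 1$. *)

(* Defs.v *)
From HB Require Import structures.
From mathcomp Require Import all_boot all_order all_algebra.
Set Implicit Arguments. Unset Strict Implicit. Unset Printing Implicit Defensive.
Import Order.TTheory GRing.Theory Num.Theory.
Local Open Scope ring_scope.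

(* Defined with fuel k; k = n.+1 is always enough since n./2 < n and
   (n./2).+1 < n for odd n >= 3. *)
Fixpoint stern_aux (k n : nat) : {poly int} :=
  match k with
  | 0%N => 0
  | k'.+1 =>
      if n == 0%N then 0
      else if n == 1%N then 1
      else if odd n then stern_aux k' n./2 + stern_aux k' (n./2).+1
      else 'X * stern_aux k' n./2
  end.

Definition stern (n : nat) : {poly int} := stern_aux n.+1 n.

(* Divisibility in Z[t] (genuinely in Z[t], not the pseudo-division of polydiv). *)
Definition zdivides (d p : {poly int}) : Prop := exists u : {poly int}, p = d * u.

Definition zcoprime (p q : {poly int}) : Prop :=
  forall d : {poly int}, zdivides d p -> zdivides d q -> d \is a GRing.unit.

Example stern_small :
  [/\ stern 0 = 0, stern 1 = 1, stern 2 = 'X, stern 3 = 1 + 'X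
    & stern 5 = 'X + (1 + 'X)].
Proof. by rewrite /stern /= ?addr0 ?add0r ?mulr0 ?mulr1. Qed.

(* Main.v *)
Require Import Defs.
From Stdlib Require Import Lia.
From mathcomp Require Import all_boot all_order all_algebra.
Import GRing.Theory.
Local Open Scope ring_scope.
Set Implicit Arguments. Unset Strict Implicit.

Ltac nlia := repeat match goal with H : is_true (_ <= _)%N |- _ => move/leP: H => H end;
  try apply/leP; rewrite -?muln2 -?plusE -?multE -?minusE; repeat match goal with H : context [addn] |- _ => rewrite -plusE in H | H : context [double] |- _ => rewrite -muln2 in H | H : context [muln] |- _ => rewrite -multE in H end; lia.

Lemma fuel k1 k2 n : (n < k1)%N -> (n < k2)%N -> stern_aux k1 n = stern_aux k2 n.
Proof.
elim: k1 k2 n => [|k1 IH] [|k2] n //= h1 h2.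
case: ifP => // n0; case: ifP => // n1.
have hh : (n./2 < n)%N.
  rewrite -{2}(odd_double_half n) -addnn.
  have : (0 < n./2)%N.
    case: n n0 n1 {h1 h2} => [|[|n]] //.
  move: (n./2) (odd n) => h [] /= hp; nlia.
case: ifP => odn.
  have hh2 : ((n./2).+1 < n)%N.
    rewrite -{2}(odd_double_half n) odn -addnn.
    have : (0 < n./2)%N.
      case: n n0 n1 odn {h1 h2 hh} => [|[|n]] //.
    move: (n./2) => h hp /=; nlia.
  rewrite (IH k2) ?(IH k2 (n./2).+1) //; nlia.
rewrite (IH k2) //; nlia.
Qed.

Lemma stern_auxS k n : stern_aux k.+1 n =
  if n == 0%N then 0
  else if n == 1%N then 1
  else if odd n then stern_aux k n./2 + stern_aux k (n./2).+1
  else 'X * stern_aux k n./2.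
Proof. by []. Qed.

Lemma stern0 : stern 0 = 0. Proof. by []. Qed.
Lemma stern1 : stern 1 = 1. Proof. by []. Qed.

Lemma stern_even n : stern n.*2 = 'X * stern n.
Proof.
case: n => [|n]; first by rewrite /stern /= mulr0.
rewrite /stern stern_auxS doubleK doubleS.
rewrite (_ : (n.*2.+2 == 0)%N = false) // (_ : (n.*2.+2 == 1)%N = false) //.
rewrite (_ : odd n.*2.+2 = false); last by rewrite /= negbK odd_double.
congr (_ * _); apply: fuel; nlia.
Qed.

Lemma stern_odd n : stern (n.*2).+1 = stern n + stern n.+1.
Proof.
case: n => [|n]; first by rewrite /stern /= add0r.
rewrite /stern stern_auxS doubleS.
rewrite (_ : (n.*2.+3 == 0)%N = false) // (_ : (n.*2.+3 == 1)%N = false) //.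
rewrite (_ : odd n.*2.+3 = true); last by rewrite /= negbK odd_double.
rewrite (_ : (n.*2.+3)./2 = n.+1); last by rewrite -doubleS /= uphalf_double.
by congr (_ + _); apply: fuel; nlia.
Qed.

Lemma nat_parity n : exists m, n = m.*2 \/ n = (m.*2).+1.
Proof.
exists n./2; have e := odd_double_half n.
case: (odd n) e => e; [right|left]; rewrite -[in LHS]e //.
Qed.

Lemma stern_at0 n : (stern n).[0] = (odd n)%:R.
Proof.
elim/ltn_ind: n => n IH.
case: (nat_parity n) => m [e|e]; subst n.
  by rewrite stern_even hornerM hornerX mul0r odd_double.
case: m IH => [|m] IH; first by rewrite /stern /= hornerC.
rewrite stern_odd hornerD !IH ?odd_double /=; try nlia.
by rewrite !negbK odd_double; case: (odd m); rewrite ?addr0 ?add0r.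
Qed.

Lemma zdiv_add d p q : zdivides d p -> zdivides d q -> zdivides d (p + q).
Proof. by move=> [u ->] [v ->]; exists (u + v); rewrite mulrDr. Qed.
Lemma zdiv_sub d p q : zdivides d p -> zdivides d q -> zdivides d (p - q).
Proof. by move=> [u ->] [v ->]; exists (u - v); rewrite mulrBr. Qed.
Lemma zdiv_mulr d p q : zdivides d p -> zdivides d (p * q).
Proof. by move=> [u ->]; exists (u * q); rewrite mulrA. Qed.
Lemma zdiv_mull d p q : zdivides d p -> zdivides d (q * p).
Proof. by move=> h; rewrite mulrC; apply: zdiv_mulr. Qed.

Lemma d0_nz d p : zdivides d p -> p.[0] = 1 -> d.[0] != 0.
Proof.
move=> [u ->]; rewrite hornerM => h; apply/eqP => e.
by move: h; rewrite e mul0r => /eqP; rewrite eq_sym oner_eq0.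
Qed.

Lemma cancelX d q : d.[0] != 0 -> zdivides d ('X * q) -> zdivides d q.
Proof.
move=> hd [w hw].
have : (d * w).[0] = 0 by rewrite -hw hornerM hornerX mul0r.
rewrite hornerM => /eqP; rewrite mulf_eq0 (negbTE hd) /= => /eqP hw0.
have /factor_theorem [w' ew] : root w 0 by apply/eqP.
exists w'; apply: (@mulIf _ 'X); first by rewrite polyX_eq0.
by rewrite mulrC hw ew subr0 mulrA.
Qed.

Lemma unit_of_div1 d : zdivides d 1 -> d \is a GRing.unit.
Proof. by move=> [u hu]; apply/unitrPr; exists u. Qed.

Lemma divXn d k : d.[0] != 0 -> zdivides d ('X ^+ k) -> d \is a GRing.unit.
Proof.
move=> hd; elim: k => [|k IH]; first by rewrite expr0; apply: unit_of_div1.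
by rewrite exprS => h; apply: IH; apply: cancelX h.
Qed.

Lemma stern_odd0 m : (stern (m.*2).+1).[0] = 1.
Proof. by rewrite stern_at0 /= odd_double. Qed.

Lemma part1 n d : zdivides d (stern n) -> zdivides d (stern n.+1) ->
  d \is a GRing.unit.
Proof.
elim/ltn_ind: n d => n IH d.
case: (nat_parity n) => m [e|e]; subst n.
  case: m IH => [|m] IH; first by move=> _; rewrite stern1; apply: unit_of_div1.
  rewrite stern_even stern_odd => h1 h2.
  have hd := d0_nz h2 (etrans (esym (congr1 (horner^~ 0) (stern_odd m.+1))) (stern_odd0 m.+1)).
  have hm := cancelX hd h1.
  have hm1 : zdivides d (stern m.+2).
    have -> : stern m.+2 = (stern m.+1 + stern m.+2) - stern m.+1.
      by rewrite [stern m.+1 + _]addrC addrK.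
    exact: zdiv_sub.
  apply: (IH m.+1) hm hm1; nlia.
rewrite -doubleS stern_even stern_odd => h1 h2.
have hd := d0_nz h1 (etrans (esym (congr1 (horner^~ 0) (stern_odd m))) (stern_odd0 m)).
have hm1 := cancelX hd h2.
have hm : zdivides d (stern m).
  by rewrite -(addrK (stern m.+1) (stern m)); apply: zdiv_sub.
apply: (IH m) hm hm1; nlia.
Qed.

Definition D (m m' : nat) := stern m'.+1 * stern m.+1 - stern m' * stern m.

Lemma D_sym m m' : D m m' = D m' m.
Proof. by rewrite /D mulrC [stern m' * _]mulrC. Qed.

Lemma alg0 (a b c : {poly int}) : a + b - (c + a) = b - c.
Proof. by rewrite opprD addrA [a + b]addrC addrAC addrK. Qed.

Lemma alg (X x y x' y' : {poly int}) :
  X * y' * (x + y) - (x' + y') * (X * x) = X * (y' * y - x' * x).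
Proof.
rewrite mulrDr mulrDl -!mulrA [x' * (X * x)]mulrCA [y' * (X * x)]mulrCA mulrBr.
exact: alg0.
Qed.

Lemma D_even j j' : D j.*2 (j'.*2).+1 = 'X * D j j'.
Proof.
rewrite /D -doubleS !stern_even !stern_odd.
by rewrite -alg mulrA.
Qed.

Lemma Dpow k m m' : (m + m' + 1 = 2 ^ k)%N -> D m m' = 'X ^+ k.
Proof.
elim: k m m' => [|k IH] m m'.
  rewrite expn0 => e; have [-> ->] : m = 0%N /\ m' = 0%N by split; nlia.
  by rewrite /D stern0 stern1 mulr0 subr0 mulr1.
wlog: m m' / ~~ odd m.
  move=> W e; case: (boolP (odd m)) => hm; last exact: W.
  rewrite D_sym; apply: W; last by rewrite addnAC addnC addnA.
  apply/negP => hm'; have := congr1 odd e.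
  by rewrite !oddD oddX hm hm'.
move=> hm e.
case: (nat_parity m) => j [ej|ej]; subst m; last by rewrite /= odd_double in hm.
case: (nat_parity m') => j' [ej'|ej']; subst m'.
  by have := congr1 odd e; rewrite !oddD oddX !odd_double.
rewrite D_even (IH j j') ?exprS //.
move: e; rewrite expnS; move: (2 ^ k)%N => K e; nlia.
Qed.

Theorem corollary2p6 :
  (forall n : nat, zcoprime (stern n) (stern n.+1)) /\
  (forall a b : nat, odd a -> odd b -> (0 < a)%N -> (0 < b)%N ->
     (exists n : nat, (a + b)%N = (2 ^ n)%N) ->
     zcoprime (stern a) (stern b)).
Proof.
split; first by move=> n d; apply: part1.
move=> a b ha hb _ _ [n en] d h1 h2.
case: (nat_parity a) => m [e|e]; subst a; first by rewrite odd_double in ha.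
case: (nat_parity b) => m' [e|e]; subst b; first by rewrite odd_double in hb.
case: n en => [|n] en; first by move: en; rewrite expn0; nlia.
have e1 : (m + m' + 1 = 2 ^ n)%N.
  by move: en; rewrite expnS; move: (2 ^ n)%N => K e; nlia.
have hD := Dpow e1.
rewrite stern_odd in h1; rewrite stern_odd in h2.
have hd := d0_nz h1 (etrans (esym (congr1 (horner^~ 0) (stern_odd m))) (stern_odd0 m)).
apply: (divXn hd (k := n)); rewrite -hD /D.
have -> : stern m'.+1 * stern m.+1 - stern m' * stern m =
  (stern m' + stern m'.+1) * stern m.+1 - stern m' * (stern m + stern m.+1).
  by rewrite mulrDl mulrDr alg0.
by apply: zdiv_sub; [apply: zdiv_mulr | apply: zdiv_mull].
Qed.
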